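(* Let $g\geqslant0$ be even. With respect to the lexicographic monomial order with $\alpha>\gamma$, the set \[\{\zeta^-_g,\ \gamma\zeta^-_{g-2},\ \gamma^2\zeta^-_{g-4},\ \ldots,\ \gamma^{g/2-1}\zeta^-_2,\ \gamma^{g/2}\}\] is a Gröbner basis for the ideal $J_g^-=J_{g+1}^-$. Consequently, the initial ideal of $J_g^-$ is generated by the monomials $\gamma^i\alpha^{g-2i}$, $0\leqslant i\leqslant g/2$, and the monomials $\alpha^a\gamma^c$ with $0\leqslant c<g/2$ and $0\leqslant a<g-2c$ represent a vector space basis of $\mathbb{C}[\alpha,\gamma]/J_g^-$.
   Context: $\zeta_k^-\in\mathbb{C}[\alpha,\gamma]$: $\zeta^-_i=0$ for $i<0$, $\zeta^-_0=1$, $\zeta^-_{k+1}=\alpha\zeta^-_k-16k^2\zeta^-_{k-1}+2k(k-1)\gamma\zeta^-_{k-2}$ for $k$ odd and $\zeta^-_{k+1}=\alpha\zeta^-_k+2k(k-1)\gamma\zeta^-_{k-2}$ for $k$ even ($k\geqslant0$); $J^-_k=(\zeta^-_k,\zeta^-_{k+1},\zeta^-_{k+2})$. *)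

(* Defs.v *)
(* C[alpha,gamma] is modelled as {poly {poly F}}:
   polynomials in alpha ('X) whose coefficients are polynomials in gamma. *)
From mathcomp Require Import all_boot all_order all_algebra.
From mathcomp Require Import reals complex.
Set Implicit Arguments. Unset Strict Implicit. Unset Printing Implicit Defensive.
Import Order.TTheory GRing.Theory Num.Theory.
Local Open Scope ring_scope.

Section Defs.
Variable F : fieldType.
Local Notation P := {poly {poly F}}.

Definition alpha : P := 'X.
Definition gamma : P := ('X)%:P.

Definition mono (m : nat * nat) : P := alpha ^+ m.1 * gamma ^+ m.2.

Definition coefm (p : P) (m : nat * nat) : F := (p`_m.1)`_m.2.

Definition lex_le (m m' : nat * nat) : bool :=
  (m.1 < m'.1)%N || ((m.1 == m'.1) && (m.2 <= m'.2)%N).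

Definition is_lead_mono (p : P) (m : nat * nat) : Prop :=
  coefm p m != 0 /\ forall m', coefm p m' != 0 -> lex_le m' m.

Definition mono_dvd (m m' : nat * nat) : bool := (m.1 <= m'.1)%N && (m.2 <= m'.2)%N.

Definition ideal_gen (S : P -> Prop) (p : P) : Prop :=
  exists (n : nat) (g c : 'I_n -> P), (forall i, S (g i)) /\ p = \sum_(i < n) c i * g i.

Definition is_groebner_basis (G I : P -> Prop) : Prop :=
  (forall g, G g -> I g) /\
  (forall f, I f -> f != 0 -> forall m, is_lead_mono f m ->
     exists g, G g /\ exists mg, is_lead_mono g mg /\ mono_dvd mg m).

Definition initial_ideal (I : P -> Prop) : P -> Prop :=
  ideal_gen (fun q => exists f, I f /\ f != 0 /\
                        exists m, is_lead_mono f m /\ q = mono m).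

Definition quotient_basis (I : P -> Prop) (B : seq (nat * nat)) : Prop :=
  uniq B /\
  (forall p : P, exists lam : nat * nat -> F,
      I (p - \sum_(m <- B) (lam m)%:P%:P * mono m)) /\
  (forall lam : nat * nat -> F,
      I (\sum_(m <- B) (lam m)%:P%:P * mono m) -> forall m, m \in B -> lam m = 0).

(* zeta_aux k = (zeta_k, zeta_{k-1}, zeta_{k-2}), with zeta_i = 0 for i < 0 *)
Fixpoint zeta_aux (k : nat) : P * P * P :=
  match k with
  | 0%N => (1, 0, 0)
  | k'.+1 =>
      let: (a, b, c) := zeta_aux k' in
      (alpha * a - (if odd k' then (16 * k' ^ 2)%N%:R * b else 0)
                 + (2 * k' * (k' - 1))%N%:R * gamma * c, a, b)
  end.

Definition zeta (k : nat) : P := (zeta_aux k).1.1.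

Definition Jm (k : nat) : P -> Prop :=
  ideal_gen (fun p => p = zeta k \/ p = zeta k.+1 \/ p = zeta k.+2).

End Defs.

(* Main.v *)
Set Warnings "-all".
Require Import Defs.
From mathcomp Require Import all_boot all_order all_algebra.
From mathcomp Require Import reals complex.
From mathcomp Require Import ring zify.
Set Implicit Arguments. Unset Strict Implicit. Unset Printing Implicit Defensive.
Import Order.TTheory GRing.Theory Num.Theory.
Local Open Scope ring_scope.

Section Ideal.
Variable F : numFieldType.
Local Notation P := {poly {poly F}}.

Lemma ig0 (S : P -> Prop) : ideal_gen S 0.
Proof. exists 0%N, (fun _ => 0), (fun _ => 0); split => [[]//|]; by rewrite big_ord0. Qed.

Lemma igS (S : P -> Prop) p : S p -> ideal_gen S p.
Proof.
move=> Sp; exists 1%N, (fun _ => p), (fun _ => 1); split => //.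
by rewrite big_ord1 mul1r.
Qed.

Lemma igD (S : P -> Prop) p q : ideal_gen S p -> ideal_gen S q -> ideal_gen S (p + q).
Proof.
move=> [n1 [g1 [c1 [H1 ->]]]] [n2 [g2 [c2 [H2 ->]]]].
exists (n1 + n2)%N, (fun i => match split i with inl j => g1 j | inr j => g2 j end),
  (fun i => match split i with inl j => c1 j | inr j => c2 j end); split.
  by move=> i; case: (split i).
rewrite big_split_ord /=; congr (_ + _); apply: eq_bigr => i _.
  by rewrite -[lshift _ _]/(unsplit (inl i)) unsplitK.
by rewrite -[rshift _ _]/(unsplit (inr i)) unsplitK.
Qed.

Lemma igM (S : P -> Prop) c p : ideal_gen S p -> ideal_gen S (c * p).
Proof.
move=> [n [g [d [H ->]]]]; exists n, g, (fun i => c * d i); split => //.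
by rewrite mulr_sumr; apply: eq_bigr => i _; rewrite mulrA.
Qed.

Lemma igN (S : P -> Prop) p : ideal_gen S p -> ideal_gen S (- p).
Proof. by move=> H; rewrite -mulN1r; apply: igM. Qed.

Lemma igB (S : P -> Prop) p q : ideal_gen S p -> ideal_gen S q -> ideal_gen S (p - q).
Proof. by move=> Hp Hq; apply: igD => //; apply: igN. Qed.

Lemma ig_sum (S : P -> Prop) n (f : 'I_n -> P) :
  (forall i, ideal_gen S (f i)) -> ideal_gen S (\sum_(i < n) f i).
Proof.
elim: n f => [|n IH] f H; first by rewrite big_ord0; apply: ig0.
by rewrite big_ord_recr; apply: igD => //; apply: IH.
Qed.

Lemma ig_trans (S T : P -> Prop) p :
  (forall q, S q -> ideal_gen T q) -> ideal_gen S p -> ideal_gen T p.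
Proof.
move=> ST [n [g [d [H ->]]]]; apply: ig_sum => i; apply: igM; exact: ST.
Qed.

End Ideal.

Section Zeta.
Variable F : numFieldType.
Local Notation P := {poly {poly F}}.
Local Notation al := (alpha F).
Local Notation ga := (gamma F).
Local Notation z := (zeta F).

Lemma zeta_auxS k : zeta_aux F k.+1 = (z k.+1, z k, (zeta_aux F k).1.2).
Proof. by rewrite /zeta /=; case: (zeta_aux F k) => [[a b] c]. Qed.

Lemma zetaE k : z k.+1 = al * z k - (if odd k then (16 * k ^ 2)%N%:R * (zeta_aux F k).1.2 else 0)
   + (2 * k * (k - 1))%N%:R * ga * (zeta_aux F k).2.
Proof. by rewrite /zeta /=; case: (zeta_aux F k) => [[a b] c]. Qed.

Lemma zeta0 : z 0 = 1. Proof. by []. Qed.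
Lemma zeta1 : z 1 = al.
Proof. by rewrite zetaE /= mulr1 subr0 mul0n mul0r mulr0 addr0. Qed.
Lemma zeta2 : z 2 = al ^+ 2 - 16.
Proof.
rewrite zetaE /= zeta1 muln0 mul0r mulr0 addr0 expr2 /=.
by congr (_ - _); rewrite mulr1.
Qed.

Lemma zetaSSS j : z j.+3 = al * z j.+2 - (if odd j then (16 * j.+2 ^ 2)%N%:R * z j.+1 else 0)
   + (2 * j.+2 * j.+1)%N%:R * ga * z j.
Proof.
rewrite zetaE (zeta_auxS j.+1) (zeta_auxS j) /=.
by case: (odd j) => //=; rewrite subn1.
Qed.

Lemma zeta_ev1 k : ~~ odd k -> z k.+1 = al * z k + (2 * k * (k - 1))%N%:R * ga * z (k - 2).
Proof.
case: k => [_|[//|j] oj].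
  by rewrite zeta1 zeta0 mulr1 mul0n mul0r mul0r addr0.
have oj' : odd j = false by move: oj; rewrite /= negbK => /negbTE.
by rewrite zetaSSS oj' subr0 !subSS !subn0.
Qed.

Lemma zeta_ev2 k : ~~ odd k -> z k.+2 = al * z k.+1 - (16 * k.+1 ^ 2)%N%:R * z k
    + (2 * k.+1 * k)%N%:R * ga * z (k - 1).
Proof.
case: k => [_|[//|j] oj].
  by rewrite zeta2 zeta1 zeta0 muln0 mul0r mul0r addr0 mulr1 expr2.
have oj' : odd j = false by move: oj; rewrite /= negbK => /negbTE.
by rewrite zetaSSS /= oj' /= !subSS !subn0.
Qed.

Lemma zeta_ev3 k : ~~ odd k -> z k.+2 = (al ^+ 2 - (16 * k.+1 ^ 2)%N%:R) * z k
    + (4 * k ^ 2)%N%:R * al * ga * z (k - 2)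
    + (4 * k.+1 * k * (k - 2) * (k - 3))%N%:R * ga ^+ 2 * z (k - 4).
Proof.
move=> ok; rewrite zeta_ev2 // zeta_ev1 //.
case: k ok => [_|[//|j] oj].
  by rewrite !natrM ?natrX; ring.
have oj' : ~~ odd j by move: oj; rewrite /= negbK.
have -> : (j.+2 - 1 = j.+1)%N by rewrite !subSS subn0.
have -> : (j.+2 - 2 = j)%N by rewrite !subSS subn0.
have -> : (j.+2 - 4 = j - 2)%N by rewrite !subSS.
have -> : (j.+2 - 3 = j - 1)%N by rewrite !subSS.
rewrite (zeta_ev1 oj') !natrM ?natrX.
ring.
Qed.

Lemma size_constM (c : {poly F}) (p : P) : (size (c%:P * p)%R <= size p)%N.
Proof.
have [->|c0] := eqVneq c 0; first by rewrite mul0r size_poly0.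
by rewrite size_Cmul.
Qed.

Lemma natr_const n : (n%:R : P) = (n%:R : {poly F})%:P.
Proof. by rewrite polyC_natr. Qed.

Lemma natr_ga n : (n%:R * ga : P) = (n%:R * 'X : {poly F})%:P.
Proof. by rewrite polyCM polyC_natr. Qed.

Lemma zeta_size_lead k : size (z k) = k.+1 /\ lead_coef (z k) = 1.
Proof.
suff H : forall k, [/\ size (z k) = k.+1 /\ lead_coef (z k) = 1,
                      size (z k.+1) = k.+2 /\ lead_coef (z k.+1) = 1 &
                      size (z k.+2) = k.+3 /\ lead_coef (z k.+2) = 1].
  by case: (H k).
clear k; elim=> [|k [[s0 _] [s1 l1] [s2 l2]]].
  rewrite zeta0 zeta1 zeta2 size_poly1 lead_coef1 /alpha size_polyX lead_coefX.
  have h : (size (16%:R : P) < size ('X^2 : P))%N.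
    by rewrite natr_const size_polyXn (leq_ltn_trans (size_polyC_leq1 _)).
  by rewrite size_addl ?size_opp // ?lead_coefDl ?size_opp // size_polyXn lead_coefXn.
split => //; rewrite zetaSSS.
have hA : size (al * z k.+2) = k.+4 /\ lead_coef (al * z k.+2) = 1.
  have nz : z k.+2 != 0 by rewrite -size_poly_eq0 s2.
  by rewrite /alpha mulrC size_mulX // lead_coefMX s2 l2.
have hB : (size ((2 * k.+2 * k.+1)%N%:R * ga * z k
    - (if odd k then (16 * k.+2 ^ 2)%N%:R * z k.+1 else 0))%R < k.+4)%N.
  apply: (leq_ltn_trans (size_add _ _)); rewrite gtn_max; apply/andP; split.
    rewrite natr_ga; apply: (leq_ltn_trans (size_constM _ _)).
    by rewrite s0; lia.
  case: (odd k); last by rewrite oppr0 size_poly0.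
  rewrite size_opp natr_const; apply: (leq_ltn_trans (size_constM _ _)).
  by rewrite s1.
rewrite -addrA; case: hA => sA lA.
by rewrite size_addl ?lead_coefDl ?sA // addrC.
Qed.

Lemma zeta_neq0 k : z k != 0.
Proof. by rewrite -size_poly_eq0; case: (zeta_size_lead k) => ->. Qed.

Lemma zeta_monic k : z k \is monic.
Proof. by rewrite monicE; case: (zeta_size_lead k) => _ ->. Qed.


End Zeta.

Section Key.
Variable F : numFieldType.
Local Notation P := {poly {poly F}}.
Local Notation al := (alpha F).
Local Notation sc c := (c%:P%:P : P).
Variable n : nat.
Variable Lp : P -> Prop.
Hypothesis LD : forall x y, Lp x -> Lp y -> Lp (x + y).
Hypothesis LM : forall c x, Lp x -> Lp (c * x).
Variable h : nat -> P.
Variables lam dd ee : nat -> nat.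
Hypothesis lam_dec : forall i j, (0 < i)%N -> (i < j)%N -> (j <= n)%N -> (lam j < lam i)%N.
Hypothesis lam_pos : forall j, (0 < lam j)%N.
Hypothesis dd_pos : forall j, (0 < j)%N -> (j < n)%N -> (0 < dd j)%N.
Hypothesis H0 : forall j, (n < j)%N -> Lp (h j).
Hypothesis HR : forall j, (0 < j)%N -> (j <= n)%N ->
  Lp ((al ^+ 2 - (lam j)%:R) * h j + (dd j)%:R * al * h j.+1 + (ee j)%:R * h j.+2).
Variables c10 c11 c20 A : nat.
Hypothesis c10_pos : (0 < c10)%N.
Hypothesis c20_pos : (0 < c20)%N.
Hypothesis A_pos : (0 < A)%N.
Hypothesis HE : Lp (al * h 0 + c10%:R * h 1).
Hypothesis HF : Lp (- A%:R * h 0 + c20%:R * (al * h 1 + c11%:R * h 2)).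

Lemma Leq x y : Lp x -> x = y -> Lp y. Proof. by move=> H <-. Qed.
Lemma LN x : Lp x -> Lp (- x). Proof. by move=> H; rewrite -mulN1r; apply: LM. Qed.
Lemma LB x y : Lp x -> Lp y -> Lp (x - y). Proof. by move=> Hx Hy; apply: LD => //; apply: LN. Qed.
Lemma L0 : Lp 0. Proof. by rewrite -(mul0r (h n.+1)); apply: LM; apply: H0. Qed.
Lemma Linv (c : F) x : c != 0 -> Lp (sc c * x) -> Lp x.
Proof.
move=> c0 H; apply: (Leq (LM (sc c^-1) H)).
by rewrite mulrA -!polyCM mulVf // mul1r.
Qed.

Section Step.
Variable p : nat.
Hypothesis p_pos : (0 < p)%N.
Hypothesis p_le : (p <= n)%N.
Variable th : F.
Hypothesis th2 : th ^+ 2 = (lam p)%:R.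
Variable Q : P.
Hypothesis HQ : forall j, Lp ((al - sc th) * Q * h j).

Let om := Q * h p.

Lemma th_neq0 : th != 0.
Proof.
have : th ^+ 2 != 0 by rewrite th2 pnatr_eq0 -lt0n lam_pos.
by apply: contraNneq => ->; rewrite expr0n.
Qed.

Lemma Hal j : Lp (al * (Q * h j) - sc th * (Q * h j)).
Proof. by apply: (Leq (HQ j)); ring. Qed.

Lemma Hal2 j : Lp (al ^+ 2 * (Q * h j) - sc (th ^+ 2) * (Q * h j)).
Proof.
by apply: (Leq (LD (LM al (Hal j)) (LM (sc th) (Hal j)))); ring.
Qed.

Lemma Hgt_aux t j : (n - t < j)%N -> (p < j)%N -> Lp (Q * h j).
Proof.
elim: t j => [|t IH] j Hj Hpj.
  by apply: LM; apply: H0; rewrite subn0 in Hj.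
have [Hj'|Hj'] := ltnP (n - t) j; first exact: IH.
have j0 : (0 < j)%N by lia.
have jn : (j <= n)%N by lia.
have l1 : Lp (Q * h j.+1) by apply: IH; lia.
have l2 : Lp (Q * h j.+2) by apply: IH; lia.
have ne : th ^+ 2 - (lam j)%:R != 0.
  rewrite th2 subr_eq0 eqr_nat; apply/negP => /eqP E.
  by have := lam_dec p_pos Hpj jn; rewrite E ltnn.
apply: (Linv ne).
apply: (Leq (LB (LB (LB (LM Q (HR j0 jn)) (Hal2 j)) (LM ((dd j)%:R * al) l1)) (LM (ee j)%:R l2))).
ring.
Qed.

Lemma Hgt j : (p < j)%N -> Lp (Q * h j).
Proof. by move=> H; apply: (@Hgt_aux n j _ H); lia. Qed.


Fixpoint wv (t : nat) : F * F :=
  match t with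
  | 0%N => (1, 0)
  | t'.+1 => let ab := wv t' in let j := (p - t)%N in
      (th ^+ 2 * ((dd j)%:R * ab.1 + (ee j)%:R * ab.2) / ((lam j)%:R - th ^+ 2), ab.1)
  end.

Lemma wv_pos t : (t < p)%N -> 0 < (wv t).1 /\ 0 <= (wv t).2.
Proof.
elim: t => [|t IH] Ht /=; first by rewrite ltr01 lexx.
have [a0 b0] := IH (ltnW Ht); split; last exact: ltW.
have jn : (p - t.+1 < n)%N by lia.
have jp : (0 < p - t.+1)%N by lia.
apply: divr_gt0; first apply: mulr_gt0.
- by rewrite th2 ltr0n lam_pos.
- apply: ltr_wpDr; first by apply: mulr_ge0 => //; rewrite ler0n.
  by apply: mulr_gt0 => //; rewrite ltr0n dd_pos.
- rewrite th2 subr_gt0 ltr_nat; apply: lam_dec => //; lia.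
Qed.

Let C t := Lp (sc th ^+ t * (Q * h (p - t)) - sc (wv t).1 * om).
Let A2 t := Lp (sc th ^+ t.+1 * (Q * h (p - t).+1) - sc (th ^+ 2) * sc (wv t).2 * om).

Lemma C_base : C 0.
Proof. by rewrite /C subn0 /= expr0 mul1r subrr; apply: L0. Qed.

Lemma A20 : A2 0.
Proof.
have H := Hgt (ltnSn p); rewrite /A2 /= subn0.
by apply: (Leq (LM (sc th) H)); ring.
Qed.

Lemma Cnext t : (t.+1 < p)%N -> C t -> A2 t -> C t.+1.
Proof.
move=> Ht Ct A2t.
set j := (p - t.+1)%N.
have E1 : (p - t = j.+1)%N by rewrite /j; lia.
have j0 : (0 < j)%N by rewrite /j; lia.
have jn : (j <= n)%N by rewrite /j; lia.
rewrite /C /A2 E1 in Ct A2t.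
have ne : th ^+ 2 - (lam j)%:R != 0.
  rewrite th2 subr_eq0 eqr_nat; apply/negP => /eqP E.
  by have := @lam_dec j p j0 ltac:(rewrite /j; lia) p_le; rewrite E ltnn.
apply: (Linv ne).
set v1 := (wv t).1; set v2 := (wv t).2.
have cv : (th ^+ 2 - (lam j)%:R) * (wv t.+1).1 = - (th ^+ 2 * ((dd j)%:R * v1 + (ee j)%:R * v2)).
  rewrite /= -/j -/v1 -/v2; field.
  by rewrite -oppr_eq0 opprB.
have -> : sc (th ^+ 2 - (lam j)%:R) * (sc th ^+ t.+1 * (Q * h (p - t.+1)) - sc (wv t.+1).1 * om)
   = sc (th ^+ 2 - (lam j)%:R) * (sc th ^+ t.+1 * (Q * h j)) - sc ((th ^+ 2 - (lam j)%:R) * (wv t.+1).1) * om.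
  by rewrite -/j; ring.
rewrite cv.
apply: (Leq (LB (LB (LB (LB (LM (sc th ^+ t.+1 * Q) (HR j0 jn)) (LM (sc th ^+ t.+1) (Hal2 j)))
  (LM ((dd j)%:R * sc th ^+ t.+1) (Hal j.+1))) (LM ((dd j)%:R * sc th ^+ 2) Ct))
  (LM (ee j)%:R A2t))).
rewrite /v1 /v2 !exprS.
move: (sc th ^+ t) => T.
ring.
Qed.

Lemma A2next t : (t.+1 < p)%N -> C t -> A2 t.+1.
Proof.
move=> Ht Ct; rewrite /A2 /=.
have -> : ((p - t.+1).+1 = p - t)%N by lia.
apply: (Leq (LM (sc th ^+ 2) Ct)).
rewrite !exprS; move: (sc th ^+ t) => T; ring.
Qed.

Lemma CA t : (t < p)%N -> C t /\ A2 t.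
Proof.
elim: t => [|t IH] Ht; first by split; [apply: C_base | apply: A20].
have [Ct A2t] := IH (ltnW Ht).
by split; [apply: Cnext | apply: A2next].
Qed.

Lemma step_all j : Lp (Q * h j).
Proof.
have thn := th_neq0.
have pp : (p.-1 < p)%N by rewrite ltn_predL.
have [C1 A21] := CA pp.
rewrite /C /A2 in C1 A21.
have E1 : (p - p.-1 = 1)%N by lia.
rewrite E1 in C1 A21.
set v1 := (wv p.-1).1 in C1 A21; set v2 := (wv p.-1).2 in A21.
have [v1p v2p] := wv_pos pp.
have thp : sc th ^+ p = sc th * sc th ^+ p.-1 by rewrite -exprS prednK.
rewrite -/(p.-1.+1) in A21.
have eqE : Lp (sc th ^+ p * (Q * h 0) + (c10%:R * sc v1) * om).
  apply: (Leq (LB (LB (LM (sc th ^+ p.-1 * Q) HE) (LM (sc th ^+ p.-1) (Hal 0))) (LM c10%:R C1))).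
  rewrite thp /v1; move: (sc th ^+ p.-1) => T; ring.
have eqF : Lp (- A%:R * (sc th ^+ p * (Q * h 0)) + (c20%:R * sc (th ^+ 2) * (sc v1 + c11%:R * sc v2)) * om).
  apply: (Leq (LB (LB (LB (LM (sc th ^+ p * Q) HF) (LM (c20%:R * sc th ^+ p) (Hal 1)))
    (LM (c20%:R * sc th ^+ 2) C1)) (LM (c20%:R * c11%:R) A21))).
  rewrite thp [_ ^+ p.-1.+1]exprS /v1 /v2; move: (sc th ^+ p.-1) => T; ring.
set val : F := A%:R * c10%:R * v1 + c20%:R * th ^+ 2 * (v1 + c11%:R * v2).
have valp : 0 < val.
  apply: ltr_pwDl.
    by apply: mulr_gt0 => //; apply: mulr_gt0; rewrite ltr0n.
  apply: mulr_ge0; first by apply: mulr_ge0; rewrite ?ler0n // th2 ler0n.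
  by apply: addr_ge0; [apply: ltW | apply: mulr_ge0; rewrite ?ler0n].
have omL : Lp om.
  apply: (@Linv val); first by rewrite gt_eqF.
  apply: (Leq (LD (LM A%:R eqE) eqF)); rewrite /val; ring.
have [ltpj|lejp] := ltnP p j; first exact: Hgt.
have [->|j0] := posnP j.
  apply: (@Linv (th ^+ p)); first by rewrite expf_neq0.
  apply: (Leq (LB eqE (LM (c10%:R * sc v1) omL))); rewrite !rmorphXn /v1; ring.
have tp : (p - j < p)%N by lia.
have [Ct _] := CA tp.
rewrite /C subKn // in Ct.
apply: (@Linv (th ^+ (p - j))); first by rewrite expf_neq0.
apply: (Leq (LD Ct (LM (sc (wv (p - j)).1) omL))); rewrite !rmorphXn; ring.
Qed.
End Step.

Variable rt : nat -> nat.
Hypothesis lam_sq : forall j, lam j = (rt j ^ 2)%N.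

Lemma peel_one p Q : (0 < p)%N -> (p <= n)%N ->
  (forall j, Lp ((al ^+ 2 - (lam p)%:R) * Q * h j)) -> forall j, Lp (Q * h j).
Proof.
move=> p0 pn H.
have th2 : ((rt p)%:R : F) ^+ 2 = (lam p)%:R by rewrite lam_sq natrX.
have th2' : (- (rt p)%:R : F) ^+ 2 = (lam p)%:R by rewrite sqrrN.
have H1 : forall j, Lp ((al - sc (rt p)%:R) * ((al + sc (rt p)%:R) * Q) * h j).
  have E : ((lam p)%:R : P) = sc ((rt p)%:R ^+ 2) by rewrite th2 !polyC_natr.
  move=> j; apply: (Leq (H j)); rewrite E; ring.
have H2 := step_all p0 pn th2 H1.
apply: (step_all p0 pn th2') => j; apply: (Leq (H2 j)); ring.
Qed.

Lemma peel_list (s : seq nat) : all (fun i => (0 < i) && (i <= n))%N s ->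
  (forall j, Lp ((\prod_(i <- s) (al ^+ 2 - (lam i)%:R)) * h j)) -> forall j, Lp (h j).
Proof.
elim: s => [|i s IH] /= Hs H j.
  by apply: (Leq (H j)); rewrite big_nil mul1r.
case/andP: Hs => /andP [i0 iN] Hs.
apply: IH => // j'; apply: (peel_one i0 iN) => j''.
by apply: (Leq (H j'')); rewrite big_cons.
Qed.

Lemma tail_aux m : (m <= n)%N -> forall j, (n - m < j)%N ->
  Lp ((\prod_(i <- iota (n - m)%N.+1 m) (al ^+ 2 - (lam i)%:R)) * h j).
Proof.
elim: m => [|m IH] mn j Hj.
  by rewrite big_nil mul1r; apply: H0; rewrite subn0 in Hj.
have -> : iota (n - m.+1)%N.+1 m.+1 = (n - m)%N :: iota (n - m)%N.+1 m.
  by rewrite /=; congr (_ :: iota _ _); lia.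
rewrite big_cons.
have [Hj'|Hj'] := ltnP (n - m) j.
  by rewrite -mulrA; apply: LM; apply: IH => //; lia.
have -> : j = (n - m)%N by lia.
set Qr := \prod_(i <- _) _.
have i0 : (0 < n - m)%N by lia.
have iN : (n - m <= n)%N by lia.
have l1 : Lp (Qr * h (n - m).+1) by apply: IH; lia.
have l2 : Lp (Qr * h (n - m).+2) by apply: IH; lia.
apply: (Leq (LB (LB (LM Qr (HR i0 iN)) (LM ((dd (n - m))%:R * al) l1)) (LM (ee (n - m))%:R l2))).
ring.
Qed.

Lemma key : Lp (h 0).
Proof.
set W := \prod_(i <- iota 1 n) (al ^+ 2 - (lam i)%:R).
have HW : forall j, (0 < j)%N -> Lp (W * h j).
  move=> j j0; have := @tail_aux n (leqnn n) j; rewrite subnn; exact.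
have HW0 : Lp (W * h 0).
  apply: (@Linv A%:R); first by rewrite pnatr_eq0 -lt0n.
  apply: (Leq (LB (LD (LM (c20%:R * al) (HW 1%N isT)) (LM (c20%:R * c11%:R) (HW 2%N isT))) (LM W HF))).
  rewrite polyC_natr polyC_natr; ring.
apply: (@peel_list (iota 1 n)).
  by apply/allP => i; rewrite mem_iota => /andP [i1 i2]; apply/andP; split; lia.
by move=> [|j] //; apply: HW.
Qed.
End Key.

Lemma ig_ind (F : numFieldType) (S D : {poly {poly F}} -> Prop) p :
  D 0 -> (forall x y, D x -> D y -> D (x + y)) -> (forall c x, D x -> D (c * x)) ->
  (forall s, S s -> D s) -> ideal_gen S p -> D p.
Proof.
move=> D0 DD DM DS [n [g [c [H ->]]]].
elim: n g c H => [|n IH] g c H; first by rewrite big_ord0.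
rewrite big_ord_recr /=; apply: DD; first exact: IH.
by apply: DM; apply: DS.
Qed.

Section KJ.
Variable F : numFieldType.
Local Notation P := {poly {poly F}}.
Local Notation al := (alpha F).
Local Notation ga := (gamma F).
Local Notation z := (zeta F).
Local Notation sc c := (c%:P%:P : P).

Definition hh n j : P := ga ^+ j * z (2 * n - 2 * j).
Definition Kset n (p : P) := exists j, (j <= n)%N /\ p = hh n j.
Definition K n := ideal_gen (Kset n).

Lemma K_h n j : K n (hh n j).
Proof.
have [jn|nj] := leqP j n; first by apply: igS; exists j.
have -> : hh n j = ga ^+ (j - n) * hh n n.
  rewrite /hh mulrA -exprD subnK ?(ltnW nj) //; congr (_ * z _); lia.
by apply: igM; apply: igS; exists n.
Qed.

Lemma K_ga n p : K n p -> K n.+1 (ga * p).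
Proof.
apply: (@ig_ind _ _ (fun p => K n.+1 (ga * p))).
- by rewrite mulr0; apply: ig0.
- by move=> x y Hx Hy; rewrite mulrDr; apply: igD.
- by move=> c x Hx; rewrite mulrCA; apply: igM.
- move=> s [j [jn ->]].
  have -> : ga * hh n j = hh n.+1 j.+1.
    by rewrite /hh mulrA -exprS; congr (_ * z _); lia.
  exact: K_h.
Qed.

Lemma hh0 n : hh n 0 = z (2 * n).
Proof. by rewrite /hh expr0 mul1r muln0 subn0. Qed.

Lemma hh1 n : hh n 1 = ga * z (2 * n - 2).
Proof. by rewrite /hh expr1 muln1. Qed.

Lemma hh2 n : hh n 2 = ga ^+ 2 * z (2 * n - 4).
Proof. by []. Qed.

Lemma even2 n : ~~ odd (2 * n). Proof. by rewrite oddM. Qed.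

Lemma z_top_K n : K n (z (2 * n).+2).
Proof.
rewrite (@zeta_ev3 F _ (even2 n)).
apply: igD; first apply: igD.
- by rewrite -hh0; apply: igM; apply: K_h.
- by rewrite -mulrA -hh1; apply: igM; apply: K_h.
- by rewrite -mulrA -hh2; apply: igM; apply: K_h.
Qed.

Lemma K_decomp n p : K n.+1 p -> exists a k, K n k /\ p = a * z (2 * n).+2 + ga * k.
Proof.
apply: (@ig_ind _ _ (fun p => exists a k, K n k /\ p = a * z (2 * n).+2 + ga * k)).
- by exists 0, 0; split; [apply: ig0 | rewrite mul0r mulr0 addr0].
- move=> x y [a1 [k1 [H1 ->]]] [a2 [k2 [H2 ->]]].
  exists (a1 + a2), (k1 + k2); split; first exact: igD.
  by rewrite mulrDl mulrDr addrACA.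
- move=> c x [a [k [H ->]]]; exists (c * a), (c * k); split; first exact: igM.
  by rewrite mulrDr !mulrA [c * ga]mulrC.
- move=> s [[|j] [jn ->]].
    exists 1, 0; split; first exact: ig0.
    by rewrite hh0 mul1r mulr0 addr0; congr (z _); lia.
  exists 0, (hh n j); split; first exact: K_h.
  by rewrite mul0r add0r /hh mulrA -exprS; congr (_ * z _); lia.
Qed.

Lemma K0_all p : K 0 p.
Proof.
rewrite -[p]mulr1; apply: igM; apply: igS; exists 0%N; split => //.
by rewrite /hh expr0 mul1r.
Qed.


Lemma ig_natK (S : P -> Prop) m x : (0 < m)%N -> ideal_gen S ((m%:R : P) * x) -> ideal_gen S x.
Proof.
move=> m0 H; have := igM (sc (m%:R^-1)) H.
rewrite mulrA -polyC_natr -polyCM -polyC_natr -polyCM mulVf ?mul1r //.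
by rewrite pnatr_eq0 -lt0n.
Qed.

Lemma igE (S : P -> Prop) x y : ideal_gen S x -> x = y -> ideal_gen S y.
Proof. by move=> H <-. Qed.

Lemma JE k x y : Jm k x -> x = y -> Jm (F:=F) k y.
Proof. by move=> H <-. Qed.

Lemma J_natK k m x : (0 < m)%N -> Jm k ((m%:R : P) * x) -> Jm (F:=F) k x.
Proof. exact: ig_natK. Qed.

Lemma Jg0 k : Jm k (z k). Proof. by apply: igS; left. Qed.
Lemma Jg1 k : Jm k (z k.+1). Proof. by apply: igS; right; left. Qed.
Lemma Jg2 k : Jm k (z k.+2). Proof. by apply: igS; right; right. Qed.

Lemma J_sub_K n p : Jm (2 * n) p -> K n p.
Proof.
apply: ig_trans => q [->|[->|->]].
- by rewrite -hh0; apply: K_h.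
- rewrite (@zeta_ev1 F _ (even2 n)) -hh0 -mulrA -hh1.
  by apply: igD; apply: igM; apply: K_h.
- exact: z_top_K.
Qed.

Lemma gaJ n p : Jm (2 * n) p -> Jm (2 * n.+1) (ga * p).
Proof.
have E : (2 * n.+1 = (2 * n).+2)%N by lia.
rewrite E.
have ev : ~~ odd (2 * n).+2 by rewrite /= negbK even2.
apply: (@ig_ind _ _ (fun p => Jm (2 * n).+2 (ga * p))).
- by rewrite mulr0; apply: ig0.
- by move=> x y Hx Hy; rewrite mulrDr; apply: igD.
- by move=> c x Hx; rewrite mulrCA; apply: igM.
- move=> s [->|[->|->]].
  + apply: (@J_natK _ (2 * (2 * n).+2 * ((2 * n).+2 - 1))); first by lia.
    have H := igB (Jg1 (2 * n).+2) (igM al (Jg0 (2 * n).+2)).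
    have e2 : ((2 * n).+2 - 2 = 2 * n)%N by lia.
    apply: (JE H); rewrite (@zeta_ev1 F _ ev) e2; ring.
  + apply: (@J_natK _ (2 * (2 * n).+3 * (2 * n).+2)); first by lia.
    have H := igD (igB (Jg2 (2 * n).+2) (igM al (Jg1 (2 * n).+2)))
                (igM (16 * (2 * n).+3 ^ 2)%N%:R (Jg0 (2 * n).+2)).
    have e1 : ((2 * n).+2 - 1 = (2 * n).+1)%N by lia.
    apply: (JE H); rewrite (@zeta_ev2 F _ ev) e1; ring.
  + by apply: igM; apply: Jg0.
Qed.

Lemma K_sub_J n p : K n p -> Jm (2 * n) p.
Proof.
elim: n p => [|n IH] p.
  move=> _; rewrite -[p]mulr1; apply: igM.
  by rewrite -(zeta0 F); apply: Jg0.
apply: ig_trans => s [[|j] [jn ->]].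
  by rewrite hh0; apply: Jg0.
have -> : hh n.+1 j.+1 = ga * hh n j.
  by rewrite /hh mulrA -exprS; congr (_ * z _); lia.
by apply: gaJ; apply: IH; apply: K_h.
Qed.

Lemma J_odd_sub n (p : P) : Jm (2 * n).+1 p -> Jm (2 * n) p.
Proof.
have ev : ~~ odd (2 * n).+2 by rewrite /= negbK even2.
apply: ig_trans => q [->|[->|->]].
- exact: Jg1.
- exact: Jg2.
- rewrite (@zeta_ev1 F _ ev) !subSS subn0.
  apply: igD; [apply: igM; apply: Jg2 | rewrite -mulrA; apply: igM; apply: igM].
  by rewrite subn0; apply: Jg0.
Qed.

Lemma J1_one : Jm (F:=F) 1 1.
Proof.
apply: (@J_natK _ 16); first by [].
have H := igB (igM al (Jg0 1)) (Jg1 1).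
apply: (JE H); rewrite zeta1 zeta2; ring.
Qed.

Section Inst.
Variable m : nat.
Let n := m.+1.
Let Lp := Jm (F:=F) (2 * n).+1.
Let kk j := (2 * n - 2 * j)%N.
Let lam j := (16 * (kk j).+1 ^ 2)%N.
Let dd j := (4 * kk j ^ 2)%N.
Let ee j := (4 * (kk j).+1 * kk j * (kk j - 2) * (kk j - 3))%N.
Let rt j := (4 * (kk j).+1)%N.
Let c10 := (2 * (2 * n) * (2 * n - 1))%N.
Let c11 := (2 * (2 * n - 2) * (2 * n - 2 - 1))%N.
Let c20 := (2 * (2 * n).+1 * (2 * n))%N.
Let A := (16 * (2 * n).+1 ^ 2)%N.

Lemma ga_z2n : Lp (ga * z (2 * n)).
Proof.
have ev : ~~ odd (2 * n).+2 by rewrite -addn2 oddD oddM.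
apply: (@J_natK _ (2 * (2 * n).+2 * ((2 * n).+2 - 1))); first by lia.
have H := igB (Jg2 (2 * n).+1) (igM al (Jg1 (2 * n).+1)).
have e2 : ((2 * n).+2 - 2 = 2 * n)%N by lia.
apply: (JE H); rewrite (@zeta_ev1 F _ ev) e2; ring.
Qed.

Lemma ga2J p : Jm (2 * m) p -> Lp (ga ^+ 2 * p).
Proof.
apply: (@ig_ind _ _ (fun p => Lp (ga ^+ 2 * p))).
- by rewrite mulr0; apply: ig0.
- by move=> x y Hx Hy; rewrite mulrDr; apply: igD.
- by move=> c x Hx; rewrite mulrCA; apply: igM.
have en : ~~ odd (2 * n) := even2 n.
move=> s [->|[->|->]].
- apply: (@J_natK _ c10); first by rewrite /c10 !muln_gt0; lia.
  have H := igB (igM ga (Jg0 (2 * n).+1)) (igM al ga_z2n).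
  apply: (JE H); rewrite (@zeta_ev1 F _ en).
  have -> : (2 * n - 2 = 2 * m)%N by rewrite /n; lia.
  rewrite /c10; ring.
- apply: (@J_natK _ c20); first by rewrite /c20 !muln_gt0; lia.
  have H := igD (igB (igM ga (Jg1 (2 * n).+1)) (igM (al * ga) (Jg0 (2 * n).+1))) (igM A%:R ga_z2n).
  apply: (JE H); rewrite (@zeta_ev2 F _ en).
  have -> : (2 * n - 1 = (2 * m).+1)%N by rewrite /n; lia.
  rewrite /c20 /A; ring.
- have -> : ((2 * m).+2 = 2 * n)%N by rewrite /n; lia.
  by rewrite expr2 -mulrA; apply: igM; apply: ga_z2n.
Qed.

Lemma Hga j : Lp (ga * hh n j).
Proof.
case: j => [|j]; first by rewrite hh0; apply: ga_z2n.
have -> : ga * hh n j.+1 = ga ^+ 2 * hh m j.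
  rewrite /hh mulrA -exprS mulrA -exprD; congr (_ * z _); rewrite /n; lia.
by apply: ga2J; apply: K_sub_J; apply: K_h.
Qed.

Lemma inst_key : Lp (z (2 * n)).
Proof.
rewrite -hh0.
apply: (@key F n Lp (@igD _ _) (@igM _ _) (hh n) lam dd ee _ _ _ _ _ c10 c11 c20 A _ _ _ _ _ rt).
- move=> i j i0 ij jn; rewrite /lam ltn_pmul2l // ltn_sqr ltnS /kk; lia.
- by move=> j; rewrite /lam muln_gt0 expn_gt0.
- by move=> j j0 jn; rewrite /dd muln_gt0 expn_gt0 /kk; lia.
- move=> j nj.
  have -> : hh n j = ga * hh n j.-1.
    rewrite /hh mulrA -exprS prednK; last by lia.
    congr (_ * z _); lia.
  exact: Hga.
- move=> [//|i] _ jn.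
  have ev : ~~ odd (kk i.+1) by rewrite /kk -mulnBr even2.
  have H := Hga i.
  apply: (JE H); rewrite /hh.
  have -> : (2 * n - 2 * i = (kk i.+1).+2)%N by rewrite /kk; lia.
  have -> : (2 * n - 2 * i.+2 = kk i.+1 - 2)%N by rewrite /kk; lia.
  have -> : (2 * n - 2 * i.+3 = kk i.+1 - 4)%N by rewrite /kk; lia.
  rewrite (@zeta_ev3 F _ ev) /lam /dd /ee !exprS.
  move: (ga ^+ i) => T; ring.
- by rewrite /c10 !muln_gt0; lia.
- by rewrite /c20 !muln_gt0; lia.
- by rewrite /A muln_gt0 expn_gt0.
- have H := Jg0 (2 * n).+1.
  apply: (JE H); rewrite (@zeta_ev1 F _ (even2 n)) hh0 hh1 /c10; ring.
- have en : ~~ odd (2 * n) := even2 n.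
  have en2 : ~~ odd (2 * n - 2) by rewrite -{2}[2%N]muln1 -mulnBr even2.
  have H := igB (Jg1 (2 * n).+1) (igM al (Jg0 (2 * n).+1)).
  apply: (JE H); rewrite (@zeta_ev2 F _ en) hh0 hh1 hh2.
  have -> : (2 * n - 1 = (2 * n - 2).+1)%N by rewrite /n; lia.
  rewrite (@zeta_ev1 F _ en2).
  have -> : (2 * n - 2 - 2 = 2 * n - 4)%N by lia.
  rewrite /c20 /c11 /A; ring.
- by move=> j; rewrite /lam /rt expnMn.
Qed.

End Inst.

Lemma J_even_sub n (p : P) : Jm (2 * n) p -> Jm (2 * n).+1 p.
Proof.
suff H : Jm (F:=F) (2 * n).+1 (z (2 * n)).
  apply: ig_trans => q [->|[->|->]]; [exact: H | exact: Jg0 | exact: Jg1].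
case: n => [|m]; last exact: inst_key.
by rewrite zeta0; apply: J1_one.
Qed.
End KJ.

Section Grob.
Variable F : numFieldType.
Local Notation P := {poly {poly F}}.
Local Notation al := (alpha F).
Local Notation ga := (gamma F).
Local Notation z := (zeta F).
Local Notation sc c := (c%:P%:P : P).

Definition inB n (m : nat * nat) : bool := (m.2 < n)%N && (m.1 < 2 * n - 2 * m.2)%N.
Definition SB n (p : P) := forall a c, coefm p (a, c) != 0 -> inB n (a, c).

Lemma coefm_ext (p q : P) : (forall a c, coefm p (a, c) = coefm q (a, c)) -> p = q.
Proof. by move=> H; apply/polyP => a; apply/polyP => c; apply: H. Qed.

Lemma coefmD (p q : P) m : coefm (p + q) m = coefm p m + coefm q m.
Proof. by rewrite /coefm !coefD. Qed.

Lemma coefmB (p q : P) m : coefm (p - q) m = coefm p m - coefm q m.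
Proof. by rewrite /coefm !coefB. Qed.

Lemma coefm0 m : coefm (0 : P) m = 0.
Proof. by rewrite /coefm !coef0. Qed.

Lemma coefm_ga (p : P) a c : coefm (ga * p) (a, c.+1) = coefm p (a, c).
Proof. by rewrite /coefm /gamma coefCM coefXM. Qed.

Lemma coefm_ga0 (p : P) a : coefm (ga * p) (a, 0%N) = 0.
Proof. by rewrite /coefm /gamma coefCM coefXM. Qed.

Lemma coefm_gaX (p : P) k a c : coefm (ga ^+ k * p) (a, c) =
  if (c < k)%N then 0 else coefm p (a, (c - k)%N).
Proof. by rewrite /coefm /gamma -rmorphXn coefCM coefXnM. Qed.

Lemma coefm_scmono (x : F) a c a' c' :
  coefm (sc x * mono F (a, c)) (a', c') = x * ((a' == a) && (c' == c))%:R.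
Proof.
rewrite /coefm /mono /= /alpha /gamma -rmorphXn coefCM coefMC coefXn coefCM.
case: (a' == a); last by rewrite mul0r coef0 mulr0.
rewrite mul1r coefXn /=.
by case: (c' == c); rewrite ?mulr1 ?mulr0 ?mul1r ?mul0r.
Qed.


Definition C0 (p : P) : P := map_poly (fun q : {poly F} => (q`_0)%:P) p.
Definition shift (p : P) : P := map_poly (drop_poly 1) p.
Definition ev0 (p : P) : {poly F} := map_poly (horner_eval (0 : F)) p.

Lemma coef_C0 (p : P) a : (C0 p)`_a = ((p`_a)`_0)%:P.
Proof. by rewrite /C0 coef_map_id0 // coef0 polyC0. Qed.

Lemma coef_shift (p : P) a : (shift p)`_a = drop_poly 1 (p`_a).
Proof. by rewrite /shift coef_map_id0 // drop_poly0r. Qed.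

Lemma coefm_C0 (p : P) a c : coefm (C0 p) (a, c) = if c == 0%N then coefm p (a, 0%N) else 0.
Proof. by rewrite /coefm coef_C0 coefC. Qed.

Lemma coefm_shift (p : P) a c : coefm (shift p) (a, c) = coefm p (a, c.+1).
Proof. by rewrite /coefm coef_shift coef_drop_poly addn1. Qed.

Lemma coef_ev0 (p : P) a : (ev0 p)`_a = coefm p (a, 0%N).
Proof. by rewrite /ev0 coef_map /= horner_evalE horner_coef0. Qed.

Lemma decomp (p : P) : p = C0 p + ga * shift p.
Proof.
apply: coefm_ext => a [|c].
  by rewrite coefmD coefm_C0 coefm_ga0 addr0.
by rewrite coefmD coefm_C0 coefm_ga coefm_shift add0r.
Qed.

Lemma size_C0 (p : P) : (size (C0 p) <= size p)%N.
Proof.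
apply/leq_sizeP => j hj; rewrite coef_C0.
by rewrite (leq_sizeP _ _ (leqnn _) j hj) coef0 polyC0.
Qed.

Lemma size_shift (p : P) : (size (shift p) <= size p)%N.
Proof.
apply/leq_sizeP => j hj; rewrite coef_shift.
by rewrite (leq_sizeP _ _ (leqnn _) j hj) drop_poly0r.
Qed.

Lemma ev0M (p q : P) : ev0 (p * q) = ev0 p * ev0 q.
Proof. by rewrite /ev0 rmorphM. Qed.

Lemma ev0_z k : size (ev0 (z k)) = k.+1 /\ ev0 (z k) \is monic.
Proof.
have [s l] := zeta_size_lead F k.
have h1 : horner_eval (0 : F) (lead_coef (z k)) != 0 by rewrite l horner_evalE hornerC oner_neq0.
rewrite /ev0 monicE size_map_poly_id0 // lead_coef_map_id0 //.
  by rewrite l horner_evalE hornerC.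
by rewrite horner_evalE horner0.
Qed.

Lemma C0_eq0 (p : P) : ev0 p = 0 -> C0 p = 0.
Proof.
move=> H; apply: coefm_ext => a c; rewrite coefm_C0 coefm0 -coef_ev0 H coef0.
by case: (c == 0%N).
Qed.

Lemma ga_neq0 : ga != 0.
Proof. by rewrite /gamma polyC_eq0 polyX_eq0. Qed.

Lemma Ind n (p : P) : K n p -> SB n p -> p = 0.
Proof.
elim: n p => [|n IH] p Kp Sp.
  apply: coefm_ext => a c; rewrite coefm0; apply/eqP; apply: contraT => H.
  by have := Sp a c H; rewrite /inB.
have [a [k [Kk Ep]]] := K_decomp Kp.
have Hev : ev0 p = ev0 a * ev0 (z (2 * n).+2).
  rewrite -ev0M; apply/polyP => j; rewrite !coef_ev0 Ep coefmD coefm_ga0 addr0.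
  by [].
have [sz mz] := ev0_z (2 * n).+2.
have szp : (size (ev0 p) <= (2 * n).+2)%N.
  apply/leq_sizeP => j hj; rewrite coef_ev0; apply/eqP; apply: contraT => H.
  by have := Sp j 0%N H; rewrite /inB /=; lia.
have ea : ev0 a = 0.
  apply/eqP; apply: contraT => H.
  move: szp; rewrite Hev size_Mmonic // sz; move: H; rewrite -size_poly_gt0; lia.
have ep : ev0 p = 0 by rewrite Hev ea mul0r.
have Ea : a = ga * shift a by rewrite {1}(decomp a) C0_eq0 // add0r.
have Epp : p = ga * shift p by rewrite {1}(decomp p) C0_eq0 // add0r.
have Es : shift p = shift a * z (2 * n).+2 + k.
  apply: (mulfI ga_neq0); rewrite -Epp {1}Ep {1}Ea; ring.
have Ks : K n (shift p) by rewrite Es; apply: igD => //; apply: igM; apply: z_top_K.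
have Ss : SB n (shift p).
  move=> j c; rewrite coefm_shift => /Sp; rewrite /inB /= => /andP [h1 h2].
  apply/andP; split; lia.
by rewrite Epp (IH _ Ks Ss) mulr0.
Qed.

Lemma coefm_big (p : P) a c : (size p <= a)%N -> coefm p (a, c) = 0.
Proof. by move=> H; rewrite /coefm (_ : p`_a = 0) ?coef0 // nth_default. Qed.

Lemma z_K n : K n.+1 (z (2 * n).+2).
Proof.
have -> : ((2 * n).+2 = 2 * n.+1)%N by lia.
by rewrite -hh0; apply: K_h.
Qed.

Lemma NF n (p : P) : exists s, [/\ SB n s, K n (p - s) & (size s <= size p)%N].
Proof.
elim: n p => [|n IH] p.
  exists 0; split; [by move=> a c; rewrite coefm0 eqxx | exact: K0_all | by rewrite size_poly0].
set d := z (2 * n).+2.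
have md : d \is monic := zeta_monic F _.
have dn0 : d != 0 := zeta_neq0 F _.
have [sd _] := zeta_size_lead F (2 * n).+2.
set r := p %% d.
have Ep : p = p %/ d * d + r := Pdiv.IdomainMonic.divp_eq md p.
have sr : (size r < size d)%N by rewrite ltn_modp.
have srp : (size r <= size p)%N.
  have [h|h] := ltnP (size p) (size d); first by rewrite /r modp_small.
  exact: ltnW (leq_trans sr h).
have [s' [S' K' ss']] := IH (shift r).
exists (C0 r + ga * s'); split.
- move=> j [|c].
    rewrite coefmD coefm_C0 coefm_ga0 addr0 /= => H.
    have jr : (j < size r)%N by rewrite ltnNge; apply: contra H => /coefm_big ->.
    rewrite /inB; apply/andP; split => /=; first by [].
    rewrite -/d sd in sr; lia.
  rewrite coefmD coefm_C0 coefm_ga add0r /= => /S'; rewrite /inB /= => /andP [h1 h2].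
  apply/andP; split; lia.
- have -> : p - (C0 r + ga * s') = p %/ d * d + ga * (shift r - s').
    by rewrite {1}Ep {1}(decomp r); ring.
  by apply: igD; [apply: igM; apply: z_K | apply: K_ga].
- apply: (leq_trans (size_add _ _)); rewrite geq_max; apply/andP; split.
    exact: leq_trans (size_C0 r) srp.
  rewrite /gamma size_Cmul ?polyX_eq0 //.
  exact: leq_trans ss' (leq_trans (size_shift r) srp).
Qed.

Lemma z_topcoef k : (z k)`_k = 1.
Proof.
have [s l] := zeta_size_lead F k.
by move: l; rewrite lead_coefE s.
Qed.

Lemma lead_h c k : is_lead_mono (ga ^+ c * z k) (k, c).
Proof.
split.
  by rewrite coefm_gaX ltnn subnn /coefm z_topcoef coef1 oner_neq0.
move=> [a' c']; rewrite coefm_gaX.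
case: ltnP => cc'; first by rewrite eqxx.
move=> H; rewrite /lex_le /=.
have [s _] := zeta_size_lead F k.
have ak : (a' < k.+1)%N.
  by rewrite ltnNge -s; apply: contra H => /coefm_big ->.
rewrite ltnS leq_eqVlt in ak; case/orP: ak => [/eqP ea|->//].
move: H; rewrite ea /coefm z_topcoef coef1 eqxx ltnn /=.
case Ed: (c' - c)%N => [|d] /=; first by move=> _; lia.
by rewrite eqxx.
Qed.

Lemma grob_div n (f : P) a c : K n f -> is_lead_mono f (a, c) ->
  exists i, [/\ (i <= n)%N, (2 * n - 2 * i <= a)%N & (i <= c)%N].
Proof.
move=> Kf [fa fl].
have [nc|cn] := leqP n c; first by exists n; split => //; lia.
have [ha|ha] := leqP (2 * n - 2 * c) a; first by exists c; split => //; lia.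
exfalso.
have fbig : forall j, (a < j)%N -> f`_j = 0.
  move=> j aj; apply/polyP => c'; rewrite coef0; apply/eqP; apply: contraT => H.
  by have := fl (j, c') H; rewrite /lex_le /=; lia.
set ftop : P := (f`_a)%:P * 'X^a.
have cftop : forall j, ftop`_j = f`_a * (j == a)%:R.
  by move=> j; rewrite /ftop coefCM coefXn.
have sl : (size (f - ftop)%R <= a)%N.
  apply/leq_sizeP => j aj; rewrite coefB cftop.
  have [->|ja] := eqVneq j a; first by rewrite mulr1 subrr.
  by rewrite mulr0 subr0 fbig //; lia.
have [s'' [S'' K'' ss'']] := NF n (f - ftop).
set s := ftop + s''.
have Ks : K n s.
  have -> : s = f - (f - ftop - s'') by rewrite /s; ring.
  by apply: igB.
have cs : forall a' c', coefm s (a', c') = (if a' == a then coefm f (a, c') else 0) + coefm s'' (a', c').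
  move=> a' c'; rewrite /s coefmD /coefm cftop.
  by case: eqP => [->|_]; rewrite ?mulr1 ?mulr0 ?coef0.
have Ss : SB n s.
  move=> a' c'; rewrite cs; have [->|na] := eqVneq a' a.
    rewrite (coefm_big c' (leq_trans ss'' sl)) addr0 => H.
    have := fl (a, c') H; rewrite /lex_le /= ltnn eqxx /= => cc.
    rewrite /inB /=; apply/andP; split; lia.
  by rewrite add0r; apply: S''.
have s0 := Ind Ks Ss.
have E := cs a c.
rewrite s0 coefm0 (coefm_big c (leq_trans ss'' sl)) addr0 in E.
move: E; case: eqP => // _ E.
by rewrite -E eqxx in fa.
Qed.
End Grob.

Section Final.
Variable F : numFieldType.
Local Notation P := {poly {poly F}}.
Local Notation al := (alpha F).
Local Notation ga := (gamma F).
Local Notation z := (zeta F).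

Lemma JK n (p : P) : Jm (2 * n) p <-> K n p.
Proof. by split; [apply: J_sub_K | apply: K_sub_J]. Qed.

Lemma gaXn_h n : ga ^+ n = hh F n n.
Proof. by rewrite /hh subnn zeta0 mulr1. Qed.

Lemma groeb n :
  is_groebner_basis
    (fun p => (exists i, (i < (2 * n)./2)%N /\ p = ga ^+ i * z (2 * n - 2 * i))
              \/ p = ga ^+ ((2 * n)./2))
    (Jm (2 * n)).
Proof.
have h2 : ((2 * n)./2 = n)%N by rewrite mul2n doubleK.
rewrite h2; split.
  move=> p [[i [_ ->]]|->]; apply/JK; [exact: (K_h F n i) | rewrite gaXn_h; exact: K_h].
move=> f /JK Kf f0 [a c] Hl.
have [i [i_n ia ic]] := grob_div Kf Hl.
have [iN|iN] := ltnP i n.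
  exists (ga ^+ i * z (2 * n - 2 * i)); split; first by left; exists i.
  exists (2 * n - 2 * i, i)%N; split; first exact: lead_h.
  by rewrite /mono_dvd /= ia ic.
have ein : i = n by lia.
exists (ga ^+ n); split; first by right.
exists (0, n)%N; split.
  by have := lead_h F n 0; rewrite zeta0 mulr1.
by rewrite /mono_dvd /=; lia.
Qed.


Lemma lead_neq0 (f : P) m : is_lead_mono f m -> f != 0.
Proof. by case=> H _; apply: contraNneq H => ->; rewrite coefm0. Qed.

Lemma init n (p : P) : initial_ideal (Jm (2 * n)) p <->
  ideal_gen (fun q => exists i, (i <= (2 * n)./2)%N /\ q = ga ^+ i * al ^+ (2 * n - 2 * i)) p.
Proof.
have h2 : ((2 * n)./2 = n)%N by rewrite mul2n doubleK.
rewrite h2; split; apply: ig_trans.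
  move=> q [f [/JK Kf [f0 [[a c] [Hl ->]]]]].
  have [i [i_n ia ic]] := grob_div Kf Hl.
  have -> : mono F (a, c) = (al ^+ (a - (2 * n - 2 * i)) * ga ^+ (c - i)) * (ga ^+ i * al ^+ (2 * n - 2 * i)).
    rewrite /mono /= -[in LHS](subnK ia) -[in LHS](subnK ic) !exprD; ring.
  by apply: igM; apply: igS; exists i.
move=> q [i [i_n ->]]; apply: igS.
exists (ga ^+ i * z (2 * n - 2 * i)); split; first by apply/JK; exact: (K_h F n i).
have Hl := lead_h F i (2 * n - 2 * i).
split; first exact: lead_neq0 Hl.
by exists (2 * n - 2 * i, i)%N; split => //; rewrite /mono /= mulrC.
Qed.

Definition BB n := [seq (a, c) | c <- iota 0 ((2 * n)./2), a <- iota 0 (2 * n - 2 * c)].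

Lemma memBB n m : (m \in BB n) = inB n m.
Proof.
have h2 : ((2 * n)./2 = n)%N by rewrite mul2n doubleK.
case: m => a c; rewrite /BB h2 /inB /=.
apply/allpairsPdep/andP => [[c' [a' [hc ha [-> ->]]]]|[hc ha]].
  by move: hc ha; rewrite !mem_iota /=; lia.
by exists c, a; rewrite !mem_iota; split => //; lia.
Qed.

Lemma uniqBB n : uniq (BB n).
Proof.
apply: allpairs_uniq_dep; first exact: iota_uniq.
  by move=> c _; exact: iota_uniq.
by move=> [x1 y1] [x2 y2] _ _ /= [-> ->].
Qed.

Lemma sum_indic (s : seq (nat * nat)) (l : nat * nat -> F) m : uniq s ->
  \sum_(x <- s) l x * (x == m)%:R = if m \in s then l m else 0.
Proof.
elim: s => [|x s IH] /=; first by rewrite big_nil.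
case/andP => xs us; rewrite big_cons IH // in_cons.
have [E|nx] := eqVneq x m; first by subst x; rewrite (negbTE xs) /= mulr1 addr0.
by rewrite /= mulr0 add0r.
Qed.

Lemma coefm_sum (s : seq (nat * nat)) (l : nat * nat -> F) m : uniq s ->
  coefm (\sum_(x <- s) (l x)%:P%:P * mono F x) m = if m \in s then l m else 0.
Proof.
move=> us; rewrite -(sum_indic l m us) /coefm !coef_sum.
apply: eq_bigr => [[a c]] _; case: m => a' c'.
by rewrite -/(coefm _ (a', c')) coefm_scmono xpair_eqE eq_sym [c' == c]eq_sym.
Qed.

Lemma qbasis n : quotient_basis (Jm (F:=F) (2 * n)) (BB n).
Proof.
split; first exact: uniqBB.
split.
  move=> p; have [s [Ss Ks _]] := NF n p; exists (coefm s).
  suff -> : \sum_(m <- BB n) ((coefm s m)%:P)%:P * mono F m = s by apply/JK.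
  apply: coefm_ext => a c; rewrite coefm_sum ?uniqBB // memBB.
  case: ifP => // H; apply/esym/eqP; apply: contraFT H => H'.
  exact: Ss H'.
move=> l /JK Ks m mB.
set s := \sum_(m <- BB n) _ in Ks.
have Ss : SB n s.
  move=> a c; rewrite /s coefm_sum ?uniqBB // -memBB.
  by case: ifP => // _; rewrite eqxx.
have := coefm_sum l m (uniqBB n); rewrite mB -/s (Ind Ks Ss) coefm0.
by move=> ->.
Qed.
End Final.

Unset Implicit Arguments.

Theorem proposition5p6 (R : realType) (g : nat) (hg : ~~ odd g) :
  (forall p, Jm (F:=R[i]) g p <-> Jm (F:=R[i]) g.+1 p) /\
  is_groebner_basis
    (fun p => (exists i, (i < g./2)%N /\
                         p = gamma R[i] ^+ i * zeta R[i] (g - 2 * i))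
              \/ p = gamma R[i] ^+ (g./2))
    (Jm (F:=R[i]) g) /\
  (forall p, initial_ideal (Jm (F:=R[i]) g) p <->
     ideal_gen (fun q => exists i, (i <= g./2)%N /\
                           q = gamma R[i] ^+ i * alpha R[i] ^+ (g - 2 * i)) p) /\
  quotient_basis (Jm (F:=R[i]) g)
    [seq (a, c) | c <- iota 0 (g./2), a <- iota 0 (g - 2 * c)].
Proof.
have [n ->] : exists n, g = (2 * n)%N by exists g./2; rewrite mul2n even_halfK.
split; first by move=> p; split; [apply: J_even_sub | apply: J_odd_sub].
split; first exact: groeb.
split; first by move=> p; exact: init.
exact: qbasis.
Qed.
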